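(* Let $w\in G(m,p,n)$ be an element that either has a single cycle (of length $n$), or has exactly two cycles, whose weights are nonzero and sum to $0$ in $\mathbb Z/m\mathbb Z$. Then $[\mathrm{id},w]_{\mathrm{cdf}}=[\mathrm{id},w]_{\ell_R}$.
   Context: Let $m,p,n$ be positive integers with $p\mid m$ and $\zeta=e^{2\pi i/m}$. The group $G(m,1,n)$ consists of pairs $w=[u;a]$ with $u\in\mathfrak S_n$ (the underlying permutation) and $a=(a_1,\dots,a_n)\in(\mathbb Z/m\mathbb Z)^n$ (the weights); $[u;a]$ is identified with the $n\times n$ monomial matrix having entry $\zeta^{a_i}$ in position $(u(i),i)$ and zeros elsewhere, the group law is matrix multiplication, and the group acts on $\mathbb C^n$. A cycle of $w$ is a cycle of $u$ (fixed points count as cycles of size $1$); $c(w)$ is the number of cycles of $w$ and $c_0(w)$ the number of cycles of weight $0$, where the weight of a set $I\subseteq[n]$ (e.g. the underlying set of a cycle) is $\sum_{i\in I}a_i\in\mathbb Z/m\mathbb Z$, and $\mathrm{wt}(w)=\sum_{i=1}^n a_i$. Since $p\mid m$, it makes sense to say an element of $\mathbb Z/m\mathbb Z$ is $\equiv 0\pmod p$. $G(m,p,n)=\{w\in G(m,1,n):\mathrm{wt}(w)\equiv 0\pmod p\}$. A reflection is an element $g$ whose fixed space $\operatorname{fix}(g)=\ker(g-1)\subseteq\mathbb C^n$ has codimension $1$; $R$ is the set of reflections of $G(m,p,n)$ (they generate the group). $\ell_R(g)$ is the minimum number of reflections whose product is $g$, and $\operatorname{codim}\operatorname{fix}(g)=n-\dim\operatorname{fix}(g)$.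 For $f\in\{\ell_R,\operatorname{codim}\operatorname{fix}\}$ define $x\le_f y$ iff $f(x)+f(x^{-1}y)=f(y)$ (a partial order), and $[\mathrm{id},w]_f=\{u: u\le_f w\}$; the subscript $\mathrm{cdf}$ means $f=\operatorname{codim}\operatorname{fix}$. *)

(* Defs.v *)
From HB Require Import structures.
From mathcomp Require Import all_boot all_order all_algebra all_fingroup all_field.
Set Implicit Arguments. Unset Strict Implicit. Unset Printing Implicit Defensive.
Import GRing.Theory Num.Theory.
Local Open Scope ring_scope.

(* The monomial matrix [u; a]: entry z^(a_i) in position (u(i), i), 0 elsewhere.
   Weights a_i are natural-number representatives of elements of Z/mZ;
   z is a primitive m-th root of unity. *)
Definition gmx (n : nat) (z : algC) (u : 'S_n) (a : 'I_n -> nat) : 'M[algC]_n :=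
  \matrix_(r, c) if r == u c then z ^+ a c else 0.

(* wt(w) = sum a_i, and membership in G(m,p,n) : wt(w) = 0 mod p
   (well defined on Z/mZ since p | m). *)
Definition inG (n p : nat) (z : algC) (g : 'M[algC]_n) : Prop :=
  exists (u : 'S_n) (a : 'I_n -> nat),
    (p %| \sum_(i < n) a i)%N /\ g = gmx z u a.

(* dim fix(g) = dim ker(g - 1) acting on column vectors *)
Definition fixdim (n : nat) (g : 'M[algC]_n) : nat :=
  \rank (kermx (g - 1%:M)^T).

Definition cdf (n : nat) (g : 'M[algC]_n) : nat := (n - fixdim g)%N.

Definition is_refl (n p : nat) (z : algC) (g : 'M[algC]_n) : Prop :=
  inG p z g /\ cdf g = 1%N.

Definition prodmx (n : nat) (s : seq 'M[algC]_n) : 'M[algC]_n :=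
  foldr (fun r acc => r *m acc) 1%:M s.

Definition ellR (n p : nat) (z : algC) (g : 'M[algC]_n) (k : nat) : Prop :=
  (exists s : seq 'M[algC]_n,
      (forall r, r \in s -> is_refl p z r) /\ size s = k /\ prodmx s = g) /\
  (forall s : seq 'M[algC]_n,
      (forall r, r \in s -> is_refl p z r) -> prodmx s = g -> (k <= size s)%N).

Definition le_R (n p : nat) (z : algC) (x y : 'M[algC]_n) : Prop :=
  exists kx kxy ky, ellR p z x kx /\ ellR p z (invmx x *m y) kxy /\
                    ellR p z y ky /\ (kx + kxy = ky)%N.

Definition le_cdf (n : nat) (x y : 'M[algC]_n) : Prop :=
  (cdf x + cdf (invmx x *m y) = cdf y)%N.

Definition cwt (n : nat) (a : 'I_n -> nat) (I : {set 'I_n}) : nat :=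
  (\sum_(i in I) a i)%N.

(* Main.v *)
Require Import Defs.
From HB Require Import structures.
From mathcomp Require Import all_boot all_order all_algebra all_fingroup all_field.
Import GRing.Theory Num.Theory.
Local Open Scope ring_scope.
From mathcomp Require Import zify.
Set Implicit Arguments. Unset Strict Implicit. Unset Printing Implicit Defensive.

Section Rank.
Variable n : nat.
Implicit Types X Y P : 'M[algC]_n.

Definition rk X := \rank (X - 1%:M).

Lemma cdfE X : cdf X = rk X.
Proof.
rewrite /cdf /fixdim mxrank_ker mxrank_tr /rk subKn //.
exact: rank_leq_row.
Qed.

Lemma rk_mul X Y : (rk (X *m Y) <= rk X + rk Y)%N.
Proof.
rewrite /rk.
have -> : X *m Y - 1%:M = X *m (Y - 1%:M) + (X - 1%:M).
  by rewrite mulmxBr mulmx1 addrA subrK.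
rewrite addnC; apply: leq_trans (mxrank_add _ _) _.
by rewrite leq_add2r mxrankM_maxr.
Qed.

Lemma rank_unitl (A : 'M[algC]_n) m (M : 'M[algC]_(n, m)) :
  A \in unitmx -> \rank (A *m M) = \rank M.
Proof.
move=> uA; apply/eqP; rewrite eqn_leq mxrankM_maxr /=.
by rewrite -{1}(mulKmx uA M) mxrankM_maxr.
Qed.

Lemma rank_unitr (A : 'M[algC]_n) m (M : 'M[algC]_(m, n)) :
  A \in unitmx -> \rank (M *m A) = \rank M.
Proof. by move=> uA; rewrite mxrankMfree // row_free_unit. Qed.

Lemma rk_conj P X : P \in unitmx -> rk (invmx P *m X *m P) = rk X.
Proof.
move=> uP; rewrite /rk.
have -> : invmx P *m X *m P - 1%:M = invmx P *m (X - 1%:M) *m P.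
  by rewrite mulmxBr mulmxBl mulmx1 mulVmx.
by rewrite rank_unitr // rank_unitl // unitmx_inv.
Qed.

Lemma rk_inv X : X \in unitmx -> rk (invmx X) = rk X.
Proof.
move=> uX; rewrite /rk.
have -> : invmx X - 1%:M = invmx X *m (- (X - 1%:M)).
  by rewrite mulmxN mulmxBr mulmx1 mulVmx // opprB.
by rewrite rank_unitl ?unitmx_inv // mxrank_opp.
Qed.

Lemma rk1 : rk 1%:M = 0%N.
Proof. by rewrite /rk subrr mxrank0. Qed.

Lemma rk_eq0 X : rk X = 0%N -> X = 1%:M.
Proof. by move/eqP; rewrite /rk mxrank_eq0 subr_eq0 => /eqP. Qed.

Lemma rk_prod (s : seq 'M[algC]_n) : (rk (prodmx s) <= \sum_(r <- s) rk r)%N.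
Proof.
elim: s => [|r s IH]; first by rewrite /= rk1.
rewrite /= big_cons; apply: leq_trans (rk_mul _ _) _.
by rewrite leq_add2l.
Qed.

Lemma prodmx_cat (s1 s2 : seq 'M[algC]_n) : prodmx (s1 ++ s2) = prodmx s1 *m prodmx s2.
Proof.
elim: s1 => [|r s IH] /=; first by rewrite mul1mx.
by rewrite IH mulmxA.
Qed.

End Rank.


Section Gmx.
Variables (m n : nat) (z : algC).
Hypothesis hz : m.-primitive_root z.

Lemma zdvd k : (z ^+ k == 1) = (m %| k)%N.
Proof. by rewrite (prim_order_dvd hz). Qed.

Lemma zmod k : z ^+ (k %% m) = z ^+ k.
Proof. exact: prim_expr_mod. Qed.

Lemma gmxM (u v : 'S_n) a b :
  gmx z u a *m gmx z v b = gmx z (v * u) (fun c => (a (v c) + b c)%N).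
Proof.
apply/matrixP => r c; rewrite !mxE (bigD1 (v c)) //= big1 => [|k kn].
  rewrite !mxE eqxx permM exprD addr0.
  by case: eqP => _; rewrite ?mul0r ?mulr1.
by rewrite !mxE (negbTE kn) mulr0.
Qed.

Lemma gmx_ext (u : 'S_n) a b : (forall c, a c %% m = b c %% m)%N ->
  gmx z u a = gmx z u b.
Proof.
by move=> h; apply/matrixP => r c; rewrite !mxE -zmod h zmod.
Qed.

Lemma gmx1 (a : 'I_n -> nat) : (forall c, m %| a c)%N -> gmx z 1 a = 1%:M.
Proof.
move=> h; apply/matrixP => r c; rewrite !mxE perm1 eq_sym.
by case: eqP => // _; apply/eqP; rewrite zdvd.
Qed.

Definition ginv (u : 'S_n) (a : 'I_n -> nat) := fun c => (m - a ((u^-1)%g c) %% m)%N.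

Hypothesis m0 : (0 < m)%N.

Lemma ginv_mod k : (m %| (m - k %% m) + k)%N.
Proof.
rewrite {2}(divn_eq k m) addnCA subnK; last by rewrite ltnW // ltn_pmod.
by rewrite dvdn_add // dvdn_mull.
Qed.

Lemma gmx_invl (u : 'S_n) a : gmx z ((u^-1)%g) (ginv u a) *m gmx z u a = 1%:M.
Proof.
rewrite gmxM mulgV; apply: gmx1 => c.
by rewrite /ginv permK ginv_mod.
Qed.

Lemma gmx_unit (u : 'S_n) a : gmx z u a \in unitmx.
Proof. by case: (mulmx1_unit (gmx_invl u a)). Qed.

Lemma gmx_inv (u : 'S_n) a : invmx (gmx z u a) = gmx z ((u^-1)%g) (ginv u a).
Proof.
have := gmx_invl u a => h.
by rewrite -[LHS]mul1mx -h -mulmxA mulmxV ?mulmx1 // gmx_unit.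
Qed.

End Gmx.


Section Refl.
Variables (m n : nat) (z : algC).
Hypothesis hz : m.-primitive_root z.
Hypothesis m0 : (0 < m)%N.

Lemma rank_outer (M : 'M[algC]_n) (x : 'cV[algC]_n) (y : 'rV[algC]_n) :
  M = x *m y -> (\rank M <= 1)%N.
Proof. by move=> ->; apply: leq_trans (mxrankM_maxl _ _) (rank_leq_col _). Qed.

Lemma zone k : (m %| k)%N -> z ^+ k = 1.
Proof. by move=> h; apply/eqP; rewrite -(prim_order_dvd hz). Qed.

Lemma zn0 : z != 0.
Proof.
apply/negP => /eqP z0; have := prim_expr_order hz.
by rewrite z0 expr0n; case: m m0 => // k _ /eqP; rewrite eq_sym oner_eq0.
Qed.

Lemma rk_tr (i j : 'I_n) (b : 'I_n -> nat) : i != j ->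
  (m %| b i + b j)%N -> (forall c, c != i -> c != j -> m %| b c)%N ->
  rk (gmx z (tperm i j) b) = 1%N.
Proof.
move=> ij hij hc; apply/eqP; rewrite eqn_leq; apply/andP; split.
  apply: (@rank_outer _ (\col_r ((r == j)%:R * z ^+ b i - (r == i)%:R))
                          (\row_c ((c == i)%:R - (c == j)%:R * z ^+ b j))).
  have ji : (j == i) = false by rewrite eq_sym (negbTE ij).
  have hz1 : z ^+ b i * z ^+ b j = 1 by rewrite -exprD zone.
  apply/matrixP => r c; rewrite !mxE big_ord1 !mxE.
  have [->|ci] := eqVneq c i.
    rewrite tpermL.
    by rewrite ?eqxx ?(negbTE ij) ?ji; case: (r == j); case: (r == i);
      rewrite /= ?mul1r ?mul0r ?subr0 ?sub0r ?mulr1 ?mulr0.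
  have [->|cj] := eqVneq c j.
    rewrite tpermR.
    by rewrite ?eqxx ?(negbTE ij) ?ji; case: (r == j); case: (r == i);
      rewrite /= ?mul1r ?mul0r ?subr0 ?sub0r ?mulr1 ?mulr0 ?mulNr ?mulrN ?opprK ?mulrA ?hz1 ?opprB ?sub0r ?add0r; rewrite ?mulrBl ?hz1 ?mul1r ?mul0r ?oppr0 ?opprB.
  rewrite tpermD 1?eq_sym // mul0r subrr mulr0.
  by case: eqP => _; rewrite ?zone ?subrr // ?subr0 hc.
rewrite lt0n; apply/negP => /eqP/rk_eq0/matrixP/(_ j i); rewrite !mxE tpermL.
by rewrite eqxx [j == i]eq_sym (negbTE ij) => /eqP; rewrite expf_eq0 (negbTE zn0) andbF.
Qed.

Lemma rk_diag (i : 'I_n) (b : 'I_n -> nat) : ~~ (m %| b i)%N ->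
  (forall c, c != i -> m %| b c)%N -> rk (gmx z 1 b) = 1%N.
Proof.
move=> hi hc; apply/eqP; rewrite eqn_leq; apply/andP; split.
  apply: (@rank_outer _ (\col_r ((r == i)%:R * (z ^+ b i - 1)))
                          (\row_c ((c == i)%:R))).
  apply/matrixP => r c; rewrite !mxE big_ord1 !mxE perm1.
  have [->|ci] := eqVneq c i.
    by case: (r == i); rewrite /= ?mul1r ?mulr1 ?mul0r ?subr0.
  rewrite mulr0; case: (r == c); last by rewrite subr0.
  by rewrite zone ?subrr // hc.
rewrite lt0n; apply/negP => /eqP/rk_eq0/matrixP/(_ i i).
by rewrite !mxE perm1 eqxx => /eqP; rewrite -(prim_order_dvd hz) (negbTE hi).
Qed.

End Refl.


Section Desc.
Variables (m p n : nat) (z : algC).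
Hypothesis hz : m.-primitive_root z.
Hypothesis m0 : (0 < m)%N.
Hypothesis pm : (p %| m)%N.

Lemma sum_perm (v : 'S_n) (F : 'I_n -> nat) :
  (\sum_c F (v c) = \sum_c F c)%N.
Proof. by rewrite [RHS](reindex_inj (@perm_inj _ v)). Qed.

Lemma inG_mul (X Y : 'M[algC]_n) : inG p z X -> inG p z Y -> inG p z (X *m Y).
Proof.
move=> [u [a [ha ->]]] [v [b [hb ->]]]; rewrite gmxM.
exists (v * u)%g, (fun c => a (v c) + b c)%N; split => //.
by rewrite big_split /= (sum_perm v a) dvdn_add.
Qed.

Lemma inG_inv (X : 'M[algC]_n) : inG p z X -> inG p z (invmx X).
Proof.
move=> [u [a [ha ->]]]; rewrite (gmx_inv hz m0).
exists (u^-1)%g, (ginv m u a); split => //.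
rewrite /ginv (sum_perm (u^-1)%g (fun c => m - a c %% m)%N).
rewrite -(dvdn_addr _ ha) addnC -big_split /=.
apply: (dvdn_trans pm); apply: dvdn_sum => c _; exact: ginv_mod.
Qed.

Lemma inG_unit (X : 'M[algC]_n) : inG p z X -> X \in unitmx.
Proof. by move=> [u [a [_ ->]]]; apply: (gmx_unit hz m0). Qed.

Lemma rowfix (u : 'S_n) a (v : 'rV[algC]_n) c :
  (v *m gmx z u a) 0 c = v 0 (u c) * z ^+ a c.
Proof.
rewrite !mxE (bigD1 (u c)) //= big1 => [|r ru]; rewrite !mxE ?eqxx ?addr0 //.
by rewrite (negbTE ru) mulr0.
Qed.

Lemma fixP (u : 'S_n) a (v : 'rV[algC]_n) :
  (v *m (gmx z u a - 1%:M) == 0) = [forall c, v 0 (u c) * z ^+ a c == v 0 c].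
Proof.
rewrite mulmxBr mulmx1 subr_eq0; apply/eqP/forallP => [h c|h].
  by rewrite -rowfix h.
by apply/rowP => c; rewrite rowfix; apply/eqP.
Qed.

End Desc.

Section Desc2.
Variables (m p n : nat) (z : algC).
Hypothesis hz : m.-primitive_root z.
Hypothesis m0 : (0 < m)%N.
Hypothesis pm : (p %| m)%N.

Lemma kerS (A B : 'M[algC]_n) :
  (forall v : 'rV_n, v *m A = 0 -> v *m B = 0) -> (kermx A <= kermx B)%MS.
Proof.
move=> H; apply/sub_kermxP; apply/row_matrixP => i; rewrite row_mul row0.
by apply: H; rewrite -row_mul mulmx_ker row0.
Qed.

Lemma rk_kerE (X : 'M[algC]_n) : \rank (kermx (X - 1%:M)) = (n - rk X)%N.
Proof. by rewrite mxrank_ker. Qed.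

Lemma rk_leqn (X : 'M[algC]_n) : (rk X <= n)%N.
Proof. exact: rank_leq_row. Qed.

Lemma zone' k : (m %| k)%N -> z ^+ k = 1.
Proof. by move=> h; apply/eqP; rewrite -(prim_order_dvd hz). Qed.

Lemma descent_step (u : 'S_n) (a : 'I_n -> nat) (i : 'I_n) : u i != i ->
  let j := u i in
  let tau := fun c => if c == i then a i else if c == j then (m - a i %% m)%N else 0%N in
  let t := gmx z (tperm i j) tau in
  [/\ is_refl p z t, t *m t = 1%:M,
      (rk (t *m gmx z u a) + 1 = rk (gmx z u a))%N &
      (m %| \sum_c tau c)%N].
Proof.
move=> uii j tau t.
have ij : i != j by rewrite eq_sym.
have ji : (j == i) = false by rewrite eq_sym (negbTE ij).
have ti : tau i = a i by rewrite /tau eqxx.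
have tj : tau j = (m - a i %% m)%N by rewrite /tau ji eqxx.
have tc c : c != i -> c != j -> tau c = 0%N.
  by move=> ci cj; rewrite /tau (negbTE ci) (negbTE cj).
have tij : (m %| tau i + tau j)%N by rewrite ti tj addnC (ginv_mod m0).
have stau : (\sum_c tau c = tau i + tau j)%N.
  rewrite (bigD1 i) //= (bigD1 j) //= big1 ?addn0 // => c /andP[ci cj].
  by rewrite tc.
have mtau : (m %| \sum_c tau c)%N by rewrite stau.
have rt : rk t = 1%N.
  apply: (rk_tr hz m0 ij tij) => c ci cj; by rewrite tc.
split => //.
- split; last by rewrite cdfE.
  exists (tperm i j), tau; split => //; exact: dvdn_trans pm mtau.
- rewrite /t gmxM tperm2; apply: (gmx1 hz) => // c.
  have [->|ci] := eqVneq c i; first by rewrite tpermL addnC.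
  have [->|cj] := eqVneq c j; first by rewrite tpermR.
  by rewrite tpermD 1?eq_sym // tc.
- set g := gmx z u a; set h := t *m g.
  have hE : h = gmx z (u * tperm i j)%g (fun c => tau (u c) + a c)%N by rewrite /h gmxM.
  set K := kermx (g - 1%:M).
  set e : 'rV[algC]_n := delta_mx 0 i.
  have KS : (K <= kermx (h - 1%:M))%MS.
    apply: kerS => v /eqP; rewrite fixP => /forallP vg.
    apply/eqP; rewrite hE fixP; apply/forallP => c.
    rewrite -(eqP (vg c)) permM exprD mulrA; apply/eqP; congr (_ * _).
    have [->|uci] := eqVneq (u c) i.
      rewrite tpermL ti; exact/eqP/(vg i).
    have [->|ucj] := eqVneq (u c) j.
      rewrite tpermR tj -(eqP (vg i)) -/j -mulrA -exprD.
      by rewrite addnC (zone' (ginv_mod m0 _)) mulr1.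
    by rewrite tpermD 1?eq_sym // tc // mulr1.
  have eS : (e <= kermx (h - 1%:M))%MS.
    apply/sub_kermxP/eqP; rewrite hE fixP; apply/forallP => c; rewrite !mxE.
    rewrite permM.
    have [->|ci] := eqVneq c i.
      by rewrite -/j tpermR !eqxx /= mul1r tj zone' // (ginv_mod m0).
    have : tperm i j (u c) != i.
      apply: contra ci => /eqP h1.
      have : u c = u i by rewrite -[u c](tpermK i j) h1 tpermL.
      by move/perm_inj ->.
    by move=> /negbTE ->; rewrite andbF mul0r.
  have eK : ~~ (e <= K)%MS.
    apply/negP => /sub_kermxP/eqP; rewrite fixP => /forallP/(_ i).
    by rewrite !mxE -/j ji !eqxx andbF mul0r eq_sym oner_eq0.
  have lt1 : (\rank K < \rank (K + e)%MS)%N.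
    have := mxrank_leqif_sup (addsmxSl K e).
    move=> [le1 eq1]; rewrite ltn_neqAle le1 andbT eq1.
    by apply: contra eK => /(submx_trans (addsmxSr K e)).
  have le2 : (\rank (K + e)%MS <= \rank (kermx (h - 1%:M)))%N.
    by apply: mxrankS; rewrite addsmx_sub KS eS.
  have gth : (rk g <= 1 + rk h)%N.
    have -> : g = t *m h.
      by rewrite /h mulmxA (_ : t *m t = 1%:M) ?mul1mx //;
         rewrite /t gmxM tperm2; apply: (gmx1 hz) => // c;
         (have [->|ci] := eqVneq c i; first by rewrite tpermL addnC);
         (have [->|cj] := eqVneq c j; first by rewrite tpermR);
         by rewrite tpermD 1?eq_sym // tc.
    by rewrite -rt rk_mul.
  move: lt1 le2; rewrite /K rk_kerE rk_kerE => lt1 le2.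
  have := rk_leqn g; have := rk_leqn h; lia.
Qed.

End Desc2.

Section Desc3.
Variables (m p n : nat) (z : algC).
Hypothesis hz : m.-primitive_root z.
Hypothesis m0 : (0 < m)%N.
Hypothesis pm : (p %| m)%N.

Lemma descent k : forall (u : 'S_n) (a : 'I_n -> nat),
  (#|[set c | u c != c]| <= k)%N ->
  exists s b, [/\ (forall r, r \in s -> is_refl p z r),
    gmx z u a = prodmx s *m gmx z 1 b,
    rk (gmx z u a) = (size s + rk (gmx z 1 b))%N &
    ((\sum_c b c) %% m = (\sum_c a c) %% m)%N].
Proof.
elim: k => [|k IH] u a hk.
  have u1 : u = 1%g.
    apply/permP => c; rewrite perm1; apply/eqP; apply: contraT => uc.
    move: hk; rewrite leqn0 cards_eq0 => /eqP/setP/(_ c).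
    by rewrite !inE uc.
  by exists [::], a; rewrite u1 mul1mx.
have [/forallP hall|] := boolP [forall c, u c == c].
  have u1 : u = 1%g by apply/permP => c; rewrite perm1; apply/eqP.
  by exists [::], a; rewrite u1 mul1mx.
rewrite negb_forall => /existsP[i uii].
have [rt tt rkh mt] := descent_step hz m0 pm a uii.
set j := u i in rt tt rkh mt.
set tau := (fun c => _) in rt tt rkh mt.
set t := gmx z _ tau in rt tt rkh mt.
have hE : t *m gmx z u a = gmx z (u * tperm i j)%g (fun c => tau (u c) + a c)%N
  by rewrite gmxM.
have hcard : (#|[set c | (u * tperm i j)%g c != c]| <= k)%N.
  rewrite -ltnS; apply: leq_trans hk; apply: proper_card.
  apply/properP; split.
    apply/subsetP => c; rewrite !inE; apply: contra => /eqP uc.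
    rewrite permM uc tpermD //.
      by apply: contraNneq uii => ci; rewrite ci uc.
    apply: contraNneq uii => jc.
    apply/eqP; have : u (u i) = u i by rewrite -/j jc uc. by move/perm_inj.
  exists i; rewrite !inE //.
  by rewrite permM -/j tpermR eqxx.
have [s [b [hs hP hr hb]]] := IH _ (fun c => tau (u c) + a c)%N hcard.
exists (t :: s), b; split.
- by move=> r; rewrite inE => /orP[/eqP->|]; [|apply: hs].
- by rewrite /= -mulmxA -hP -hE mulmxA tt mul1mx.
- by rewrite /= -rkh hE hr addn1 addSn.
- rewrite hb big_split /= (sum_perm u tau) -modnDm.
  by rewrite (eqP mt) add0n modn_mod.
Qed.

End Desc3.


Section Bound.
Variables (m n : nat) (z : algC).
Hypothesis hz : m.-primitive_root z.
Hypothesis m0 : (0 < m)%N.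

Lemma ker_bound (M : 'M[algC]_n) (R : {set 'I_n}) :
  (forall v : 'rV_n, v *m M = 0 -> (forall r, r \in R -> v 0 r = 0) -> v = 0) ->
  (\rank (kermx M) <= #|R|)%N.
Proof.
move=> H.
pose Q : 'M[algC]_(n, #|R|) := \matrix_(r, k) (r == enum_val k)%:R.
rewrite -(mxrank_mul_ker (kermx M) Q).
set C := (kermx M :&: kermx Q)%MS.
have -> : C = 0.
  apply/row_matrixP => i; rewrite row0.
  have vC := row_sub i C.
  have vM : row i C *m M = 0.
    by apply/sub_kermxP; apply: submx_trans vC (capmxSl _ _).
  have vQ : row i C *m Q = 0.
    by apply/sub_kermxP; apply: submx_trans vC (capmxSr _ _).
  apply: H => // r rR.
  have := congr1 (fun X : 'rV_#|R| => X 0 (enum_rank_in rR r)) vQ.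
  rewrite !mxE (bigD1 r) //= big1 => [|k kr]; last first.
    by rewrite !mxE (enum_rankK_in rR rR) (negbTE kr) mulr0.
  by rewrite !mxE (enum_rankK_in rR rR) eqxx mulr1 addr0.
by rewrite mxrank0 addn0 rank_leq_col.
Qed.

Variables (u : 'S_n) (a : 'I_n -> nat).

Lemma zpow_neq0 k : z ^+ k != 0.
Proof. by rewrite expf_eq0 negb_and (zn0 hz m0) orbT. Qed.

Lemma fix_rel (v : 'rV[algC]_n) : v *m (gmx z u a - 1%:M) = 0 ->
  forall c, v 0 c = z ^+ a c * v 0 (u c).
Proof.
move/eqP; rewrite fixP => /forallP h c.
by rewrite -(eqP (h c)) mulrC.
Qed.

Lemma fix_iter (v : 'rV[algC]_n) : v *m (gmx z u a - 1%:M) = 0 ->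
  forall k c, v 0 c = z ^+ (\sum_(y <- traject u c k) a y) * v 0 (iter k u c).
Proof.
move=> hv; elim=> [|k IH] c; first by rewrite big_nil expr0 mul1r.
rewrite /= big_cons exprD -mulrA -iterS iterSr -IH.
exact: fix_rel.
Qed.

Lemma fix_nz (v : 'rV[algC]_n) c : v *m (gmx z u a - 1%:M) = 0 ->
  ~~ (m %| cwt a (porbit u c))%N -> v 0 c = 0.
Proof.
move=> hv hw.
have := fix_iter hv #|porbit u c| c; rewrite iter_porbit.
rewrite big_uniq ?uniq_traject_porbit //.
have -> : (\sum_(i in traject u c #|porbit u c|) a i = cwt a (porbit u c))%N.
  by apply: eq_bigl => y; rewrite -porbit_traject.
move=> h; apply/eqP; move: h => /eqP.
rewrite -subr_eq0 -{1}[v 0 c]mul1r -mulrBl mulf_eq0 subr_eq0 => /orP[|//].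
by rewrite eq_sym -(prim_order_dvd hz) (negbTE hw).
Qed.

Lemma fix_prop (v : 'rV[algC]_n) c : v *m (gmx z u a - 1%:M) = 0 ->
  v 0 c = 0 -> forall k, v 0 ((u ^+ k)%g c) = 0.
Proof.
move=> hv h0; elim=> [|k IH]; first by rewrite expg0 perm1.
rewrite expgSr permM; apply/eqP.
have := fix_rel hv ((u ^+ k)%g c); rewrite IH => /esym/eqP.
by rewrite mulf_eq0 (negbTE (zpow_neq0 _)).
Qed.

Definition Rset := [set x | (m %| cwt a (porbit u x))%N &&
                            [forall y in porbit u x, (x <= y)%N]].

Lemma rk_lower : (n - #|Rset| <= rk (gmx z u a))%N.
Proof.
have : (\rank (kermx (gmx z u a - 1%:M)) <= #|Rset|)%N.
  apply: ker_bound => v hv hR; apply/rowP => c; rewrite mxE.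
  have [hw|hw] := boolP (m %| cwt a (porbit u c))%N; last exact: fix_nz.
  have [x xC xmin] := @arg_minnP _ c (fun y => y \in porbit u c) val (porbit_id u c).
  have ex : porbit u x = porbit u c by apply/eqP; rewrite eq_porbit_mem.
  have xR : x \in Rset.
    rewrite inE ex hw; apply/forallP => y; apply/implyP; exact: xmin.
  have [k ->] : exists k, c = (u ^+ k)%g x.
    by apply/porbitP; rewrite porbit_sym.
  exact: fix_prop (hR _ xR) _.
rewrite rk_kerE; have := rk_leqn (gmx z u a); lia.
Qed.

Lemma Rset_card : (#|Rset| <= #|porbits u|)%N.
Proof.
rewrite -(card_in_imset (f := porbit u) (D := mem Rset)).
  apply: subset_leq_card; apply/subsetP => C /imsetP[x _ ->].
  exact: imset_f.
move=> x y; rewrite !inE => /andP[_ /forallP hx] /andP[_ /forallP hy] e.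
have yx : y \in porbit u x by rewrite e porbit_id.
have xy : x \in porbit u y by rewrite -e porbit_id.
apply/val_inj/eqP; rewrite eqn_leq.
by rewrite (implyP (hx y) yx) (implyP (hy x) xy).
Qed.

Lemma Rset_full : #|Rset| = #|porbits u| ->
  forall C, C \in porbits u -> (m %| cwt a C)%N.
Proof.
move=> hc.
have heq : porbit u @: Rset = porbits u.
  apply/eqP; rewrite eqEcard; apply/andP; split.
    by apply/subsetP => C /imsetP[x _ ->]; exact: imset_f.
  rewrite -hc card_in_imset //.
  move=> x y; rewrite !inE => /andP[_ /forallP hx] /andP[_ /forallP hy] e.
  have yx : y \in porbit u x by rewrite e porbit_id.
  have xy : x \in porbit u y by rewrite -e porbit_id.
  apply/val_inj/eqP; rewrite eqn_leq.
  by rewrite (implyP (hx y) yx) (implyP (hy x) xy).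
move=> C; rewrite -heq => /imsetP[x]; rewrite inE => /andP[h _] ->.
exact: h.
Qed.

End Bound.


Lemma arith1 (a b c d n : nat) : (b + c <= n -> a <= b -> n - d <= c -> a <= d)%N.
Proof. lia. Qed.

Lemma arith2 (r1 r2 r3 k1 k2 k3 : nat) : (r1 <= k1 -> r2 <= k2 -> k1 + k2 = k3 ->
  k3 <= r3 -> r3 <= r1 + r2 -> r1 + r2 = r3)%N.
Proof. lia. Qed.

Lemma sum2 n (b : 'I_n -> nat) (i j : 'I_n) : i != j ->
 (\sum_c b c = b i + b j + \sum_(c | (c != i) && (c != j)) b c)%N.
Proof.
move=> ij. rewrite (bigD1 i) //= (bigD1 j) 1?eq_sym //=. by rewrite addnA.
Qed.

Section Main.
Variables (m p n : nat) (z : algC) (u : 'S_n) (a : 'I_n -> nat).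
Hypotheses (m0 : (0 < m)%N) (pm : (p %| m)%N) (hz : m.-primitive_root z).
Hypothesis ha : (p %| \sum_(i < n) a i)%N.
Hypothesis hcyc : #|porbits u| = 1%N \/
   (#|porbits u| = 2%N /\
    (forall C, C \in porbits u -> (cwt a C %% m)%N <> 0%N) /\
    ((\sum_(C in porbits u) cwt a C) %% m)%N = 0%N).

Lemma rk_prod_refl (s : seq 'M[algC]_n) :
  (forall r, r \in s -> is_refl p z r) -> (rk (prodmx s) <= size s)%N.
Proof.
elim: s => [|r s IH] hs /=; first by rewrite rk1.
apply: leq_trans (rk_mul _ _) _.
have [_ ] := hs r (mem_head _ _); rewrite cdfE => ->.
by rewrite add1n ltnS IH // => x xs; apply: hs; rewrite inE xs orbT.
Qed.

Lemma sum_porbits (f : 'I_n -> nat) :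
  (\sum_c f c = \sum_(C in porbits u) \sum_(c in C) f c)%N.
Proof.
rewrite (partition_big_imset (porbit u)) /=.
apply: eq_bigr => C /imsetP[x _ ->].
by apply: eq_bigl => c; rewrite eq_porbit_mem.
Qed.

Lemma diag_lower (b : 'I_n -> nat) :
  (#|[set c | ~~ (m %| b c)%N]| <= rk (gmx z 1 b))%N.
Proof.
have : (\rank (kermx (gmx z 1 b - 1%:M)) <= #|~: [set c | ~~ (m %| b c)%N]|)%N.
  apply: ker_bound => v hv hR; apply/rowP => c; rewrite mxE.
  have [hc|hc] := boolP (c \in [set c | ~~ (m %| b c)%N]); last first.
    by apply: hR; rewrite inE.
  have := fix_rel hv c; rewrite perm1 => /eqP.
  rewrite -subr_eq0 -{1}[v 0 c]mul1r -mulrBl mulf_eq0 subr_eq0 => /orP[|/eqP//].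
  by rewrite eq_sym -(prim_order_dvd hz) => h; move: hc; rewrite inE h.
rewrite rk_kerE; have := cardsC [set c | ~~ (m %| b c)%N]; rewrite card_ord; have := rk_leqn (gmx z 1 b); lia.
Qed.

Let W := gmx z u a.

Lemma keyK (y : 'M[algC]_n) : inG p z y ->
  (rk y + rk (invmx y *m W) <= n)%N ->
  exists s, [/\ (forall r, r \in s -> is_refl p z r), prodmx s = y & size s = rk y].
Proof.
move=> yG hy.
have yU := inG_unit hz m0 yG.
move: (yG) => [uy [ay [hay yE]]].
have [s [b [hs hP hr hb]]] := descent hz m0 pm ay (leqnn #|[set c | uy c != c]|).
rewrite -yE in hP hr.
set d := gmx z 1 b in hP hr.
set P := prodmx s in hP hr.
have dU : d \in unitmx by apply: (gmx_unit hz m0).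
have rP := rk_prod_refl hs.
have hdy : (rk (invmx d *m y) <= size s)%N.
  by rewrite hP mulmxA (rk_conj _ dU).
have hdW : (rk (invmx d *m W) <= size s + rk (invmx y *m W))%N.
  have -> : invmx d *m W = (invmx d *m y) *m (invmx y *m W).
    by rewrite -!mulmxA (mulmxA y) (mulmxV yU) mul1mx.
  by apply: leq_trans (rk_mul _ _) _; rewrite leq_add2r.
have star : (rk d + rk (invmx d *m W) <= n)%N.
  apply: leq_trans _ hy; rewrite hr (addnC (size s)) -addnA leq_add2l //.
set b' := ginv m 1 b.
have dW : invmx d *m W = gmx z u (fun c => b' (u c) + a c)%N.
  by rewrite /d (gmx_inv hz m0) /W gmxM invg1 mulg1.
have hlow := rk_lower hz m0 u (fun c => b' (u c) + a c)%N.
rewrite -dW in hlow.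
have hS := diag_lower b.
have hR := Rset_card m u (fun c => b' (u c) + a c)%N.
set S := [set c | ~~ (m %| b c)%N] in hS.
set R := Rset m u _ in hlow hR.
have SR : (#|S| <= #|R|)%N by apply: arith1 star hS hlow.
have pb : (p %| \sum_c b c)%N.
  by rewrite /dvdn -(modn_dvdm _ pm) hb (modn_dvdm _ pm).
have Sn c : c \notin S -> (m %| b c)%N.
  by rewrite inE negbK.
have Sy c : c \in S -> ~~ (m %| b c)%N.
  by rewrite inE.
have hP2 : (#|porbits u| <= 2)%N by case: hcyc => [->|[->]].
case hS0 : #|S| => [|[|[|k]]].
-
  have d1 : d = 1%:M.
    apply: (gmx1 hz) => c; apply: Sn; apply/negP => cS.
    by move: hS0; rewrite (cardD1 c) cS.
  exists s; split => //; first by rewrite hP d1 mulmx1.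
  by rewrite hr d1 rk1 addn0.
-
  move/eqP: hS0 => /cards1P[i Si].
  have rd : rk d = 1%N.
    apply: (rk_diag hz (i := i)).
      by apply: Sy; rewrite Si set11.
    by move=> c ci; apply: Sn; rewrite Si inE.
  exists (s ++ [:: d]); split.
  + move=> r; rewrite mem_cat => /orP[/hs//|]; rewrite inE => /eqP ->.
    split; last by rewrite cdfE.
    by exists 1%g, b.
  + by rewrite prodmx_cat /= mulmx1 hP.
  + by rewrite size_cat hr rd.
- have hS2 := hS0.
  move/eqP: hS0 => /cards2P[i [j [ij Sij]]].
  have hRf : #|R| = #|porbits u|.
    by apply/eqP; rewrite eqn_leq hR (leq_trans hP2) // -hS2.
  have all0 := Rset_full hRf.
  have [h1|[_ [_ hsum]]] := hcyc.
    by move: (leq_trans SR hR); rewrite hS2 h1.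
  have ma : (m %| \sum_c a c)%N by rewrite sum_porbits /dvdn hsum.
  have ma2 : (m %| \sum_c (b' (u c) + a c))%N.
    rewrite sum_porbits; apply: dvdn_sum => C hC; exact: all0.
  rewrite big_split /= (sum_perm u b') (dvdn_addl _ ma) in ma2.
  have hb' c : (m %| b' c + b c)%N by rewrite /b' /ginv invg1 perm1 (ginv_mod m0).
  have mb : (m %| \sum_c b c)%N.
    rewrite -(dvdn_addr _ ma2) -big_split /=; exact: dvdn_sum.
  have hij : (m %| b i + b j)%N.
    move: mb; rewrite (sum2 b ij) => /dvdn_add_eq ->.
    apply: dvdn_sum => c /andP[ci cj]; apply: Sn.
    by rewrite Sij !inE negb_or ci cj.
  have oth c : c != i -> c != j -> (m %| b c)%N.
    by move=> ci cj; apply: Sn; rewrite Sij !inE negb_or ci cj.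
  set t1 := gmx z (tperm i j) (fun _ => 0%N).
  set t2 := gmx z (tperm i j) b.
  have r1 : rk t1 = 1%N by apply: (rk_tr hz m0 ij) => //; rewrite addn0 dvdn0.
  have r2 : rk t2 = 1%N by apply: (rk_tr hz m0 ij).
  have dt : d = t1 *m t2.
    by rewrite /t1 /t2 gmxM tperm2.
  have rd : rk d = 2%N.
    apply/eqP; rewrite eqn_leq; apply/andP; split; last by rewrite -hS2.
    by rewrite dt; apply: leq_trans (rk_mul _ _) _; rewrite r1 r2.
  exists (s ++ [:: t1; t2]); split.
  + move=> r; rewrite mem_cat => /orP[/hs//|]; rewrite !inE => /orP[] /eqP ->.
      split; last by rewrite cdfE.
      by exists (tperm i j), (fun _ => 0%N); rewrite big1 ?dvdn0.
    split; last by rewrite cdfE.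
    by exists (tperm i j), b.
  + by rewrite prodmx_cat /= mulmx1 hP dt.
  + by rewrite size_cat hr rd.
- by move: (leq_trans SR (leq_trans hR hP2)); rewrite hS0.
Qed.

Lemma ellR_of (y : 'M[algC]_n) : inG p z y ->
  (rk y + rk (invmx y *m W) <= n)%N -> ellR p z y (rk y).
Proof.
move=> yG hy; have [s [hs hp hsz]] := keyK yG hy.
split; first by exists s.
by move=> s' hs' <-; apply: rk_prod_refl.
Qed.

Lemma inv_uniq (A B : 'M[algC]_n) : B *m A = 1%:M -> A \in unitmx -> invmx A = B.
Proof.
by move=> h uA; rewrite -[invmx A]mul1mx -h -mulmxA mulmxV // mulmx1.
Qed.


Lemma main_equiv (x : 'M[algC]_n) : inG p z x -> (le_cdf x W <-> le_R p z x W).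
Proof.
move=> xG.
have WG : inG p z W by exists u, a.
have WU := inG_unit hz m0 WG.
have xU := inG_unit hz m0 xG.
have split_W : W = x *m (invmx x *m W) by rewrite mulmxA mulmxV // mul1mx.
rewrite /le_cdf !cdfE; split => [h|].
  exists (rk x), (rk (invmx x *m W)), (rk W); split; last split; last split => //.
  - by apply: ellR_of => //; rewrite h rk_leqn.
  - apply: ellR_of; first by apply: inG_mul (inG_inv hz m0 pm xG) WG.
    have yU : invmx x *m W \in unitmx by rewrite unitmx_mul unitmx_inv xU WU.
    have -> : invmx (invmx x *m W) = invmx W *m x.
      by apply: inv_uniq => //; rewrite -mulmxA (mulmxA x) mulmxV // mul1mx mulVmx.
    by rewrite rk_conj // addnC h rk_leqn.
  - by apply: ellR_of => //; rewrite mulVmx // rk1 addn0 rk_leqn.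
move=> [kx [kxy [ky [[[s1 [h1 [z1 p1]]] _] [[[s2 [h2 [z2 p2]]] _] [[_ m3] e]]]]]].
have a1 : (rk x <= kx)%N by rewrite -z1 -p1 rk_prod_refl.
have a2 : (rk (invmx x *m W) <= kxy)%N by rewrite -z2 -p2 rk_prod_refl.
have a3 : (ky <= rk W)%N.
  have hb0 : (rk W + rk (invmx W *m W) <= n)%N by rewrite mulVmx // rk1 addn0 rk_leqn.
  have [s [hs hp hsz]] := keyK WG hb0.
  by rewrite -hsz; apply: m3.
have a4 : (rk W <= rk x + rk (invmx x *m W))%N by rewrite {1}split_W rk_mul.
exact: arith2 a1 a2 e a3 a4.
Qed.

End Main.


Theorem mainTheorem10 (m p n : nat) (z : algC) (u : 'S_n) (a : 'I_n -> nat) :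
  (0 < m)%N -> (0 < p)%N -> (0 < n)%N -> (p %| m)%N ->
  m.-primitive_root z ->
  (p %| \sum_(i < n) a i)%N ->
  (#|porbits u| = 1%N \/
   (#|porbits u| = 2%N /\
    (forall C, C \in porbits u -> (cwt a C %% m)%N <> 0%N) /\
    ((\sum_(C in porbits u) cwt a C) %% m)%N = 0%N)) ->
  forall x : 'M[algC]_n, inG p z x ->
    (le_cdf x (gmx z u a) <-> le_R p z x (gmx z u a)).
Proof.
move=> m0 p0 n0 pm hz ha hcyc x xG.
exact: (main_equiv m0 pm hz ha hcyc xG).
Qed.
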